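(* Let $H_1,\dots,H_k$ and $F$ be fixed graphs. Then, as $n\to\infty$, $\mathrm{ex}(n,(H_1,\dots,H_k),F)=\Theta(\max_{i\le k}\mathrm{ex}(n,H_i,F))$ and $\mathrm{ex}^{\mathrm{col}}(n,(H_1,\dots,H_k),F)=\Theta(\max_{i\le k}\mathrm{ex}(n,H_i,F))$.
   Context: For graphs $H,G$, $\mathcal N(H,G)$ denotes the number of (not necessarily induced) subgraphs of $G$ isomorphic to $H$. $\mathrm{ex}(n,H,F)$ is the maximum of $\mathcal N(H,G)$ over all $F$-free graphs $G$ on $n$ vertices. $\mathrm{ex}(n,(H_1,\dots,H_k),F)$ is the maximum of $\sum_{i=1}^k\mathcal N(H_i,G)$ over all $F$-free graphs $G$ on $n$ vertices. For a graph $G$ whose edges are colored with colors $1,\dots,k$, let $G_i$ be the subgraph consisting of the edges of color $i$; $\mathrm{ex}^{\mathrm{col}}(n,(H_1,\dots,H_k),F)$ is the maximum of $\sum_{i=1}^k \mathcal N(H_i,G_i)$ over all $F$-free graphs $G$ on $n$ vertices and all colorings of their edges with colors $1,\dots,k$. *)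

(* Defs.v *)
From HB Require Import structures.
From mathcomp Require Import all_boot all_order all_algebra.
Set Implicit Arguments. Unset Strict Implicit. Unset Printing Implicit Defensive.
Import Order.TTheory GRing.Theory Num.Theory.

(* A (finite simple) graph on a finite vertex type T is given by its edge set:
   a set of 2-element subsets of T. A "fixed graph" H has vertex set 'I_h. *)
Definition is_graph (T : finType) (E : {set {set T}}) : bool :=
  [forall e in E, #|e| == 2].

Definition iso_to (T : finType) (h : nat) (EH : {set {set 'I_h}})
    (S : {set T}) (E : {set {set T}}) : bool :=
  [exists f : {ffun 'I_h -> T},
     [&& injectiveb f, f @: setT == S & E == [set (f @: (e : {set 'I_h})) | e in EH]]].

(* N(H, G): number of (not necessarily induced) subgraphs (S, E) of G
   (E a subset of the edges of G) isomorphic to H. *)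
Definition count_sub (T : finType) (h : nat) (EH : {set {set 'I_h}})
    (G : {set {set T}}) : nat :=
  #|[set p : {set T} * {set {set T}} | (p.2 \subset G) && iso_to EH p.1 p.2]|.

Definition Ffree (T : finType) (f : nat) (EF : {set {set 'I_f}})
    (G : {set {set T}}) : bool := count_sub EF G == 0.

Definition ex (n h f : nat) (EH : {set {set 'I_h}}) (EF : {set {set 'I_f}}) : nat :=
  \max_(G : {set {set 'I_n}} | is_graph G && Ffree EF G) count_sub EH G.

Definition ex_multi (n k : nat) (hs : 'I_k -> nat)
    (EH : forall i : 'I_k, {set {set 'I_(hs i)}})
    (f : nat) (EF : {set {set 'I_f}}) : nat :=
  \max_(G : {set {set 'I_n}} | is_graph G && Ffree EF G)
     \sum_(i < k) count_sub (EH i) G.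

Definition ex_col (n k : nat) (hs : 'I_k -> nat)
    (EH : forall i : 'I_k, {set {set 'I_(hs i)}})
    (f : nat) (EF : {set {set 'I_f}}) : nat :=
  \max_(G : {set {set 'I_n}} | is_graph G && Ffree EF G)
   \max_(c : {ffun {set 'I_n} -> 'I_k})
     \sum_(i < k) count_sub (EH i) [set e in G | c e == i].

Definition max_ex (n k : nat) (hs : 'I_k -> nat)
    (EH : forall i : 'I_k, {set {set 'I_(hs i)}})
    (f : nat) (EF : {set {set 'I_f}}) : nat :=
  \max_(i < k) ex n (EH i) EF.

Definition bigTheta (u v : nat -> nat) : Prop :=
  exists (c C : rat) (N : nat), (0 < c)%R /\ (0 < C)%R /\
    forall n, (N <= n)%N ->
      (c * (v n)%:R <= (u n)%:R)%R /\ ((u n)%:R <= C * (v n)%:R)%R.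

(* Main.v *)
Require Import Defs.
From mathcomp Require Import all_boot all_order all_algebra.
Import Order.TTheory GRing.Theory Num.Theory.

Lemma count_sub_mono (T : finType) h (E : {set {set 'I_h}}) (G1 G2 : {set {set T}}) :
  G1 \subset G2 -> count_sub E G1 <= count_sub E G2.
Proof.
move=> s12; apply: subset_leq_card; apply/subsetP => p; rewrite !inE.
by case/andP => H1 ->; rewrite (subset_trans H1 s12).
Qed.

Lemma ex_ge n h f (E : {set {set 'I_h}}) (EF : {set {set 'I_f}}) (G : {set {set 'I_n}}) :
  is_graph G && Ffree EF G -> count_sub E G <= ex n E EF.
Proof. by move=> HG; rewrite /ex; by rewrite /ex (bigD1 G) //= leq_maxl. Qed.

Section S.
Variables (k : nat) (hs : 'I_k -> nat) (EH : forall i : 'I_k, {set {set 'I_(hs i)}})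
  (f : nat) (EF : {set {set 'I_f}}) (n : nat).

Lemma multi_lo : max_ex n EH EF <= ex_multi n EH EF.
Proof.
apply/bigmax_leqP => i _; apply/bigmax_leqP => G HG.
rewrite /ex_multi (bigD1 G) //=; apply: leq_trans _ (leq_maxl _ _).
by rewrite (bigD1 i) //= leq_addr.
Qed.

Lemma multi_hi : ex_multi n EH EF <= k * max_ex n EH EF.
Proof.
apply/bigmax_leqP => G HG.
apply: (@leq_trans (\sum_(i < k) max_ex n EH EF)).
  apply: leq_sum => i _; apply: leq_trans (@ex_ge n _ _ (EH i) EF G HG) _.
  by rewrite /max_ex (bigD1 i) //= leq_maxl.
by rewrite sum_nat_const card_ord.
Qed.

Lemma col_lo : max_ex n EH EF <= ex_col n EH EF.
Proof.
apply/bigmax_leqP => i _; apply/bigmax_leqP => G HG.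
rewrite /ex_col (bigD1 G) //=; apply: leq_trans _ (leq_maxl _ _).
rewrite (bigD1 [ffun=> i]) //=; apply: leq_trans _ (leq_maxl _ _).
rewrite (bigD1 i) //=.
have -> : [set e in G | [ffun=> i] e == i] = G.
  by apply/setP => e; rewrite inE ffunE eqxx andbT.
exact: leq_addr.
Qed.

Lemma col_hi : ex_col n EH EF <= k * max_ex n EH EF.
Proof.
apply/bigmax_leqP => G HG; apply/bigmax_leqP => c _.
apply: (@leq_trans (\sum_(i < k) max_ex n EH EF)).
  apply: leq_sum => i _.
  apply: (@leq_trans (count_sub (EH i) G)).
    apply: count_sub_mono.
    by apply/subsetP => e; rewrite inE => /andP[].
  apply: leq_trans (@ex_ge n _ _ (EH i) EF G HG) _.
  by rewrite /max_ex (bigD1 i) //= leq_maxl.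
by rewrite sum_nat_const card_ord.
Qed.
End S.

Local Open Scope ring_scope.
Lemma theta_of (u v : nat -> nat) (k : nat) :
  (forall n, v n <= u n)%N -> (forall n, u n <= k * v n)%N -> bigTheta u v.
Proof.
move=> lo hi; exists 1%R, (k.+1)%:R%R, 0%N; split; first exact: ltr01.
split; first by rewrite ltr0n.
move=> n _; split; first by rewrite mul1r ler_nat.
rewrite -natrM ler_nat; apply: leq_trans (hi n) _.
by rewrite leq_mul2r leqnSn orbT.
Qed.

Local Close Scope ring_scope.
Theorem mainTheorem2 (k : nat) (hs : 'I_k -> nat)
    (EH : forall i : 'I_k, {set {set 'I_(hs i)}})
    (f : nat) (EF : {set {set 'I_f}}) :
  (forall i : 'I_k, is_graph (EH i)) -> is_graph EF ->
  bigTheta (fun n => ex_multi n EH EF) (fun n => max_ex n EH EF) /\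
  bigTheta (fun n => ex_col n EH EF) (fun n => max_ex n EH EF).
Proof.
move=> _ _; split; apply: (@theta_of _ _ k) => n.
- exact: multi_lo.
- exact: multi_hi.
- exact: col_lo.
- exact: col_hi.
Qed.
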